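(* Let $X$ be a finite-dimensional real Hilbert space and $A,B$ closed convex subsets of $X$ with $\operatorname{ri}A\cap\operatorname{ri}B\ne\varnothing$. Let $L=\operatorname{aff}(A\cup B)$, $T=P_BR_A+\mathrm{Id}-P_A$, and let $c\in A\cap B$. Then there exist $\delta>0$ and $\theta\in[0,1[$ such that for all $x\in L$ with $\|x-c\|\le\delta$: $\langle P_Ax-R_Ax,\;P_BR_Ax-R_Ax\rangle\le\theta\,d_A(x)\,d_B(R_Ax)$, and consequently $\|x-Tx\|^2\ge\frac{1-\theta}{5}\max\{d_A^2(x),d_B^2(x)\}$.
   Context: $P_S$ is the metric projection onto a closed convex set $S$, $R_S=2P_S-\mathrm{Id}$, $d_S$ the distance function, $\operatorname{aff}$ the affine hull, $\operatorname{ri}$ the relative interior. *)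

(* Defs.v *)
From Stdlib Require Import Reals List ClassicalEpsilon.
From mathcomp Require Import ssreflect ssrfun ssrbool eqtype ssrnat seq fintype bigop.
Open Scope R_scope.

(* The finite-dimensional real Hilbert space R^n with the standard vinner product. *)
Definition vec (n : nat) := 'I_n -> R.

Definition vzero {n} : vec n := fun _ => 0.
Definition vadd {n} (u v : vec n) : vec n := fun i => u i + v i.
Definition vsub {n} (u v : vec n) : vec n := fun i => u i - v i.
Definition vscale {n} (a : R) (u : vec n) : vec n := fun i => a * u i.

Definition vinner {n} (u v : vec n) : R := \big[Rplus/0]_(i < n) (u i * v i).
Definition vnorm {n} (u : vec n) : R := sqrt (vinner u u).

Definition closedS {n} (S : vec n -> Prop) : Prop :=
  forall x, (forall eps, 0 < eps -> exists y, S y /\ vnorm (vsub x y) < eps) -> S x.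

Definition convexS {n} (S : vec n -> Prop) : Prop :=
  forall x y t, S x -> S y -> 0 <= t <= 1 ->
    S (vadd (vscale t x) (vscale (1 - t) y)).

Definition aff {n} (S : vec n -> Prop) : vec n -> Prop :=
  fun x => exists l : seq (R * vec n),
    (forall p, List.In p l -> S (snd p)) /\
    foldr (fun p s => fst p + s) 0 l = 1 /\
    x = foldr (fun p v => vadd (vscale (fst p) (snd p)) v) vzero l.

Definition ri {n} (S : vec n -> Prop) : vec n -> Prop :=
  fun x => S x /\ exists eps, 0 < eps /\
    forall y, aff S y -> vnorm (vsub y x) < eps -> S y.

Definition setU2 {n} (A B : vec n -> Prop) : vec n -> Prop := fun x => A x \/ B x.

Definition is_proj {n} (S : vec n -> Prop) (x p : vec n) : Prop :=
  S p /\ forall y, S y -> vnorm (vsub x p) <= vnorm (vsub x y).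

(* metric projection P_S (well defined for nonempty closed convex S) *)
Definition proj {n} (S : vec n -> Prop) (x : vec n) : vec n :=
  epsilon (inhabits vzero) (fun p => is_proj S x p).

Definition refl {n} (S : vec n -> Prop) (x : vec n) : vec n :=
  vsub (vscale 2 (proj S x)) x.

Definition dS {n} (S : vec n -> Prop) (x : vec n) : R := vnorm (vsub x (proj S x)).

Definition Tdr {n} (A B : vec n -> Prop) (x : vec n) : vec n :=
  vsub (vadd (proj B (refl A x)) x) (proj A x).

(* Main.v *)
From HB Require Import structures.
Require Import Defs.
From Stdlib Require Import Reals.
From Stdlib Require Import Lra Psatz Rtopology FunctionalExtensionality Classical ClassicalEpsilon List ZArith.
From mathcomp Require Import ssreflect ssrfun ssrbool eqtype ssrnat seq fintype bigop.
Open Scope R_scope.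
Set Implicit Arguments.

Section Sums.
Variable I : Type.
Lemma big_linR (r : seq I) (P : pred I) (F G : I -> R) a b :
  \big[Rplus/0]_(i <- r | P i) (a * F i + b * G i) =
  a * \big[Rplus/0]_(i <- r | P i) F i + b * \big[Rplus/0]_(i <- r | P i) G i.
Proof. elim: r => [|x r IH]; rewrite ?big_nil ?big_cons; first ring.
case: (P x); rewrite IH; ring. Qed.
Lemma big_nonnegR (r : seq I) (P : pred I) (F : I -> R) :
  (forall i, 0 <= F i) -> 0 <= \big[Rplus/0]_(i <- r | P i) F i.
Proof. move=> H; elim: r => [|x r IH]; rewrite ?big_nil ?big_cons; first lra.
case: (P x) => //; move: (H x); lra. Qed.
End Sums.

HB.instance Definition _ := Monoid.isComLaw.Build R 0 Rplus (fun a b c => esym (Rplus_assoc a b c)) Rplus_comm Rplus_0_l.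

Section Vec.
Variable n : nat.
Implicit Types u v w : vec n.

Lemma ip_sym u v : vinner u v = vinner v u.
Proof. rewrite /vinner; apply: eq_bigr => i _; ring. Qed.
Lemma ip_lin u v w a b : vinner (fun i => a * u i + b * v i) w = a * vinner u w + b * vinner v w.
Proof. rewrite /vinner -big_linR; apply: eq_bigr => i _; ring. Qed.
Lemma ip_addl u v w : vinner (vadd u v) w = vinner u w + vinner v w.
Proof. have := ip_lin u v w 1 1; rewrite !Rmult_1_l => <-.
rewrite /vinner; apply: eq_bigr => i _; rewrite /vadd; ring. Qed.
Lemma ip_subl u v w : vinner (vsub u v) w = vinner u w - vinner v w.
Proof. have := ip_lin u v w 1 (-1); rewrite Rmult_1_l => H.
have -> : vinner u w - vinner v w = vinner u w + -1 * vinner v w by ring.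
rewrite -H /vinner; apply: eq_bigr => i _; rewrite /vsub; ring. Qed.
Lemma ip_scalel a u w : vinner (vscale a u) w = a * vinner u w.
Proof. have := ip_lin u u w a 0; rewrite Rmult_0_l Rplus_0_r => <-.
rewrite /vinner; apply: eq_bigr => i _; rewrite /vscale; ring. Qed.
Lemma ip_addr u v w : vinner w (vadd u v) = vinner w u + vinner w v.
Proof. by rewrite ip_sym ip_addl (ip_sym u) (ip_sym v). Qed.
Lemma ip_subr u v w : vinner w (vsub u v) = vinner w u - vinner w v.
Proof. by rewrite ip_sym ip_subl (ip_sym u) (ip_sym v). Qed.
Lemma ip_scaler a u w : vinner w (vscale a u) = a * vinner w u.
Proof. by rewrite ip_sym ip_scalel (ip_sym u). Qed.
Lemma ip_pos u : 0 <= vinner u u.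
Proof. apply: big_nonnegR => i; nra. Qed.
Lemma coord_sq u j : (u j) ^ 2 <= vinner u u.
Proof. rewrite /vinner (bigD1 j) //=.
rewrite /= Rmult_1_r -{1}(Rplus_0_r (u j * u j)); apply: Rplus_le_compat_l.
apply: big_nonnegR => i; nra. Qed.
Lemma vnorm_sq u : vnorm u ^ 2 = vinner u u.
Proof. rewrite /vnorm /= Rmult_1_r; apply: sqrt_sqrt; exact: ip_pos. Qed.
Lemma vnorm_ge0 u : 0 <= vnorm u.
Proof. exact: sqrt_pos. Qed.
Lemma ip_zero_r u : vinner u vzero = 0.
Proof. rewrite /vinner big1 // => i _; rewrite /vzero; ring. Qed.
Lemma CS2 u v : vinner u v ^ 2 <= vinner u u * vinner v v.
Proof.
have key : forall t, 0 <= vinner u u - 2 * t * vinner u v + t ^ 2 * vinner v v.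
  move=> t; have := ip_pos (vsub u (vscale t v)).
  rewrite !ip_subl !ip_subr !ip_scalel !ip_scaler (ip_sym v u); lra.
have hp := ip_pos u; have hq := ip_pos v.
case: (Rle_lt_or_eq_dec 0 (vinner v v) hq) => hq'.
- have := key (vinner u v / vinner v v).
  have -> : vinner u u - 2 * (vinner u v / vinner v v) * vinner u v +
    (vinner u v / vinner v v) ^ 2 * vinner v v =
    (vinner u u * vinner v v - vinner u v ^ 2) / vinner v v by field; lra.
  move=> h; have : 0 <= (vinner u u * vinner v v - vinner u v ^ 2) by
    apply: (Rmult_le_reg_r (/ vinner v v)); [apply: Rinv_0_lt_compat; lra | lra].
  lra.
- rewrite -hq'; case: (Req_dec (vinner u v) 0) => hm; first (rewrite hm; nra).
  have := key ((vinner u u + 1) / (2 * vinner u v)); rewrite -hq'.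
  have -> : vinner u u - 2 * ((vinner u u + 1) / (2 * vinner u v)) * vinner u v +
      ((vinner u u + 1) / (2 * vinner u v)) ^ 2 * 0 = -1 by field.
  lra.
Qed.
Lemma CS u v : vinner u v <= vnorm u * vnorm v.
Proof. have h := CS2 u v. have h1 := vnorm_sq u; have h2 := vnorm_sq v.
have := vnorm_ge0 u; have := vnorm_ge0 v. rewrite -h1 -h2 in h.
move=> a b; case: (Rle_lt_dec (vinner u v) (vnorm u * vnorm v)) => // hlt.
have : (vnorm u * vnorm v) ^ 2 < vinner u v ^ 2.
  have := Rmult_le_pos _ _ b a; nra.
lra. Qed.
Lemma vnorm_sym u v : vnorm (vsub u v) = vnorm (vsub v u).
Proof. rewrite /vnorm; f_equal; rewrite !ip_subl !ip_subr (ip_sym u v); ring. Qed.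
Lemma vnorm_scale a u : vnorm (vscale a u) = Rabs a * vnorm u.
Proof. rewrite /vnorm ip_scalel ip_scaler -Rmult_assoc sqrt_mult; [|nra|exact: ip_pos].
by rewrite -(Rsqr_def a) sqrt_Rsqr_abs. Qed.
End Vec.

Lemma big_cvR (I : Type) (r : seq I) (P : pred I) (F : nat -> I -> R) (G : I -> R) :
  (forall i, Un_cv (fun k => F k i) (G i)) ->
  Un_cv (fun k => \big[Rplus/0]_(i <- r | P i) F k i) (\big[Rplus/0]_(i <- r | P i) G i).
Proof. move=> H; elim: r => [|x r IH].
- rewrite big_nil. have -> : (fun k => \big[Rplus/0]_(i <- [::] | P i) F k i) = fun _ => 0.
    by apply: functional_extensionality => k; rewrite big_nil.
  move=> e he; exists 0%nat => k _; rewrite /Rdist Rminus_diag Rabs_R0 //.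
- rewrite big_cons. case Px: (P x).
  + have -> : (fun k => \big[Rplus/0]_(i <- x :: r | P i) F k i) =
      fun k => F k x + \big[Rplus/0]_(i <- r | P i) F k i.
      by apply: functional_extensionality => k; rewrite big_cons Px.
    exact: CV_plus.
  + have -> : (fun k => \big[Rplus/0]_(i <- x :: r | P i) F k i) =
      fun k => \big[Rplus/0]_(i <- r | P i) F k i.
      by apply: functional_extensionality => k; rewrite big_cons Px.
    exact: IH.
Qed.

Definition incr (phi : nat -> nat) := forall k, lt (phi k) (phi (S k)).
Lemma incr_ge phi : incr phi -> forall k, le k (phi k).
Proof. move=> H; elim=> [|k IH]; first lia. have := H k; lia. Qed.
Lemma incr_comp phi psi : incr phi -> incr psi -> incr (fun k => phi (psi k)).
Proof. move=> H1 H2 k /=.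
have mono : forall a b, lt a b -> lt (phi a) (phi b).
  move=> a b; elim: b => [|b IH] hab; first lia.
  have := H1 b; case: (Nat.eq_dec a b) => [->|ne]; first lia.
  have := IH ltac:(lia); lia.
exact: mono (H2 k). Qed.
Lemma cv_sub u l phi : Un_cv u l -> incr phi -> Un_cv (fun k => u (phi k)) l.
Proof. move=> H hphi e he; case: (H e he) => N HN; exists N => k hk.
apply: HN; have := @incr_ge phi hphi k; lia. Qed.

Lemma cv_le0 f l : Un_cv f l -> (forall k, f k <= 0) -> l <= 0.
Proof. move=> H hf; case: (Rle_lt_dec l 0) => // hl.
case: (H l hl) => N HN; have := HN N (le_n N); rewrite /Rdist.
have := hf N => a; move/Rabs_def2 => [b c]; lra. Qed.

Lemma cv_inv : Un_cv (fun k => / (INR k + 1)) 0.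
Proof. move=> e he; case: (archimed (/ e)) => h1 _.
have he' : 0 < / e by apply: Rinv_0_lt_compat.
exists (Z.to_nat (up (/ e))) => k hk; rewrite /Rdist Rminus_0_r.
have hk' : 0 < INR k + 1 by have := pos_INR k; lra.
rewrite Rabs_pos_eq; last by apply: Rlt_le; apply: Rinv_0_lt_compat.
have : / e < INR k + 1.
  have : IZR (up (/ e)) <= INR k.
    rewrite -(Z2Nat.id (up (/ e))); last by apply: le_IZR; lra.
    rewrite -INR_IZR_INZ; apply: le_INR; lia.
  lra.
move=> h; rewrite -(Rinv_inv e); apply: Rinv_lt_contravar => //; nra. Qed.

Lemma BW1 (u : nat -> R) M : (forall k, Rabs (u k) <= M) ->
  exists psi l, incr psi /\ Un_cv (fun k => u (psi k)) l.
Proof. move=> hM.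
case: (Bolzano_Weierstrass u (fun c => -M <= c <= M) (compact_P3 (-M) M)).
  move=> k; have := hM k; have := Rle_abs (u k); have := Rle_abs (- u k); rewrite Rabs_Ropp; lra.
move=> l hl.
have H : forall N k, exists p, le N p /\ Rabs (u p - l) < / (INR k + 1).
  move=> N k; have hp : 0 < / (INR k + 1) by apply: Rinv_0_lt_compat; have := pos_INR k; lra.
  case: (hl (disc l (mkposreal _ hp)) N).
    by exists (mkposreal _ hp) => y hy.
  move=> p [h1 h2]; exists p; split => //.
pose g := fun N k => proj1_sig (constructive_indefinite_description _ (H N k)).
have hg : forall N k, le N (g N k) /\ Rabs (u (g N k) - l) < / (INR k + 1).
  by move=> N k; rewrite /g; case: (constructive_indefinite_description _ _).
pose psi := fix f k := match k with 0%nat => g 0%nat 0%nat | S k' => g (S (f k')) k end.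
exists psi, l; split.
  move=> k /=; case: (hg (S (psi k)) (S k)); lia.
move=> e he; case: (cv_inv he) => N HN; exists N => k hk.
have := HN k hk; rewrite /Rdist Rminus_0_r => h.
have hk2 : Rabs (u (psi k) - l) < / (INR k + 1).
  case: k {hk h} => [|k] /=; first exact: (proj2 (hg 0%nat 0%nat)).
  exact: (proj2 (hg _ _)).
have := Rle_abs (/ (INR k + 1)); lra. Qed.

Section VecCv.
Variable n : nat.
Definition vcv (w : nat -> vec n) (wb : vec n) := forall i, Un_cv (fun k => w k i) (wb i).

Lemma BWn (w : nat -> vec n) M : (forall k i, Rabs (w k i) <= M) ->
  exists phi wb, incr phi /\ vcv (fun k => w (phi k)) wb.
Proof. move=> hM.
have H : forall l : seq 'I_n, exists phi, incr phi /\
   forall i, i \in l -> exists li, Un_cv (fun k => w (phi k) i) li.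
  elim=> [|j l [phi [hphi IH]]].
    by exists id; split => // k /=; lia.
  case: (@BW1 (fun k => w (phi k) j) M (fun k => hM _ _)) => psi [lj [hpsi hcv]].
  exists (fun k => phi (psi k)); split; first exact: incr_comp.
  move=> i; rewrite in_cons => /orP [/eqP ->|hi]; first by exists lj.
  case: (IH i hi) => li hli; exists li.
  exact: (@cv_sub (fun k => w (phi k) i) li psi hli hpsi).
case: (H (index_enum 'I_n)) => phi [hphi Hi].
have Hi' : forall i, exists li, Un_cv (fun k => w (phi k) i) li.
  by move=> i; apply: Hi; rewrite mem_index_enum.
exists phi, (fun i => proj1_sig (constructive_indefinite_description _ (Hi' i))); split => //.
by move=> i; case: (constructive_indefinite_description _ _).
Qed.

Lemma ip_cv w wb q qb : vcv w wb -> vcv q qb ->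
  Un_cv (fun k => vinner (w k) (q k)) (vinner wb qb).
Proof. move=> h1 h2; rewrite /vinner; apply: big_cvR => i; exact: CV_mult. Qed.
Lemma vcv_sub w wb q qb : vcv w wb -> vcv q qb ->
  vcv (fun k => vsub (w k) (q k)) (vsub wb qb).
Proof. move=> h1 h2 i; rewrite /vsub; exact: CV_minus. Qed.
Lemma vcv_const q : vcv (fun _ => q) q.
Proof. move=> i e he; exists 0%nat => k _; rewrite /Rdist Rminus_diag Rabs_R0 //. Qed.
Lemma vcv_close w q qb C : 0 <= C ->
  (forall k, vinner (vsub (w k) (q k)) (vsub (w k) (q k)) <= C * / (INR k + 1)) ->
  vcv q qb -> vcv w qb.
Proof. move=> hC hw hq i.
have -> : (fun k => w k i) = fun k => q k i + (w k i - q k i).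
  apply: functional_extensionality => k; ring.
rewrite -(Rplus_0_r (qb i)); apply: CV_plus => //.
move=> e he; have he2 : 0 < e ^ 2 / (C + 1) by apply: Rdiv_lt_0_compat; nra.
case: (cv_inv he2) => N HN; exists N => k hk.
have := HN k hk; rewrite /Rdist !Rminus_0_r => h.
have hk0 : 0 < / (INR k + 1) by apply: Rinv_0_lt_compat; have := pos_INR k; lra.
rewrite Rabs_pos_eq in h; last lra.
have h2 : (w k i - q k i) ^ 2 <= vinner (vsub (w k) (q k)) (vsub (w k) (q k)) := coord_sq (vsub (w k) (q k)) i; have h3 := hw k.
have : (w k i - q k i) ^ 2 < e ^ 2.
  have : C * / (INR k + 1) <= (C + 1) * / (INR k + 1) by nra.
  have : (C + 1) * / (INR k + 1) < e ^ 2.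
    have -> : e ^ 2 = (C + 1) * (e ^ 2 / (C + 1)) by field; lra.
    apply: Rmult_lt_compat_l; lra.
  lra.
move=> h4; apply: Rabs_def1; nra. Qed.
End VecCv.

Section Proj.
Variable n : nat.
Implicit Types u v w x : vec n.

Lemma vnorm_le_nn u v : vnorm u <= vnorm v -> vinner u u <= vinner v v.
Proof. move=> h; rewrite -!vnorm_sq; have := vnorm_ge0 u; nra. Qed.
Lemma nn_le_vnorm u v : vinner u u <= vinner v v -> vnorm u <= vnorm v.
Proof. move=> h; rewrite /vnorm; exact: sqrt_le_1_alt. Qed.

Lemma abs_le_sq a b : a ^ 2 <= b -> Rabs a <= b + 1.
Proof. move=> h; case: (Rle_dec 0 a) => ha.
  rewrite Rabs_pos_eq //; nra. rewrite Rabs_left; nra. Qed.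

Lemma proj_exists (A : vec n -> Prop) x : closedS A -> (exists s, A s) ->
  exists p, is_proj A x p.
Proof. move=> hAc [s0 hs0].
pose E := fun r => exists s, A s /\ r = - vinner (vsub x s) (vsub x s).
case: (completeness E).
  exists 0 => r [s [_ ->]]; have := ip_pos (vsub x s); lra.
  by exists (- vinner (vsub x s0) (vsub x s0)); exists s0.
move=> m [hub hlub]. pose D := - m.
have hD : forall y, A y -> D <= vinner (vsub x y) (vsub x y).
  move=> y hy; have := hub _ (ex_intro _ y (conj hy erefl)); rewrite /D; lra.
have H : forall k : nat, exists s, A s /\ vinner (vsub x s) (vsub x s) < D + / (INR k + 1).
  move=> k; have hk : 0 < / (INR k + 1) by apply: Rinv_0_lt_compat; have := pos_INR k; lra.
  apply: NNPP => hno.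
  have : m <= m - / (INR k + 1); last lra.
  apply: hlub => r [s [hs ->]].
  have : ~ (vinner (vsub x s) (vsub x s) < D + / (INR k + 1)) by move=> h; apply: hno; exists s.
  rewrite /D; lra.
pose s := fun k => proj1_sig (constructive_indefinite_description _ (H k)).
have hs : forall k, A (s k) /\ vinner (vsub x (s k)) (vsub x (s k)) < D + / (INR k + 1).
  by move=> k; rewrite /s; case: (constructive_indefinite_description _ _).
have hD0 : 0 <= D.
  have : m <= 0; last (rewrite /D; lra).
  apply: hlub => r [y [_ ->]]; have := ip_pos (vsub x y); lra.
have hbnd : forall k i, Rabs (s k i) <= D + vinner x x + 3.
  move=> k i; case: (hs k) => _ h1.
  have hk : / (INR k + 1) <= 1.
    rewrite -Rinv_1; apply: Rinv_le_contravar; first lra. have := pos_INR k; lra.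
  have h2 : (x i - s k i) ^ 2 <= vinner (vsub x (s k)) (vsub x (s k)) := coord_sq _ i.
  have h3 := coord_sq x i.
  have := abs_le_sq h2; have := abs_le_sq h3.
  have := Rabs_triang (x i) (- (x i - s k i)); rewrite Rabs_Ropp.
  have -> : x i + - (x i - s k i) = s k i by ring.
  have := vnorm_ge0 x; lra.
case: (@BWn _ s _ hbnd) => phi [sb [hphi hcv]].
have hcv0 : Un_cv (fun k => vinner (vsub sb (s (phi k))) (vsub sb (s (phi k)))) 0.
  have := ip_cv (vcv_sub (vcv_const sb) hcv) (vcv_sub (vcv_const sb) hcv).
  have -> : vinner (vsub sb sb) (vsub sb sb) = 0.
    rewrite !ip_subl !ip_subr; ring.
  by [].
have hsb : A sb.
  apply: hAc => e he; case: (hcv0 (e ^ 2) ltac:(nra)) => N HN.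
  exists (s (phi N)); split; first exact: (proj1 (hs _)).
  have := HN N (le_n N); rewrite /Rdist Rminus_0_r Rabs_pos_eq; last exact: ip_pos.
  rewrite -vnorm_sq => h; have := vnorm_ge0 (vsub sb (s (phi N))); nra.
exists sb; split => // y hy; apply: nn_le_vnorm; apply: Rle_trans (hD _ hy).
have hcv1 := ip_cv (vcv_sub (vcv_const x) hcv) (vcv_sub (vcv_const x) hcv).
have hcv2 : Un_cv (fun k => vinner (vsub x (s (phi k))) (vsub x (s (phi k))) - D - / (INR k + 1))
   (vinner (vsub x sb) (vsub x sb) - D - 0).
  apply: CV_minus; [apply: CV_minus => //|exact: cv_inv].
  move=> e he; exists 0%nat => k _; rewrite /Rdist Rminus_diag Rabs_R0 //.
have : vinner (vsub x sb) (vsub x sb) - D - 0 <= 0; last lra.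
apply: (cv_le0 hcv2) => k; have := proj2 (hs (phi k)).
have := incr_ge hphi k => hk.
have : / (INR (phi k) + 1) <= / (INR k + 1).
  apply: Rinv_le_contravar; first (have := pos_INR k; lra).
  have := le_INR _ _ hk; lra.
lra.
Qed.

Lemma proj_spec (A : vec n -> Prop) x : closedS A -> (exists s, A s) ->
  is_proj A x (proj A x).
Proof. move=> h1 h2; rewrite /proj; apply: epsilon_spec; exact: proj_exists. Qed.

Lemma nn_sub_scale (X S : vec n) t : vinner (vsub X (vscale t S)) (vsub X (vscale t S)) =
  vinner X X - 2 * t * vinner X S + t ^ 2 * vinner S S.
Proof. rewrite ip_subl !ip_subr !ip_scalel !ip_scaler (ip_sym S X); ring. Qed.

Lemma proj_char (A : vec n -> Prop) x p s : convexS A -> is_proj A x p -> A s ->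
  vinner (vsub x p) (vsub s p) <= 0.
Proof. move=> hv [hp hmin] hs.
have key : forall t, 0 < t <= 1 -> 2 * t * vinner (vsub x p) (vsub s p) <= t ^ 2 * vinner (vsub s p) (vsub s p).
  move=> t ht; have hq := hv s p t hs hp ltac:(lra).
  have := @vnorm_le_nn _ _ (hmin _ hq).
  have -> : vsub x (vadd (vscale t s) (vscale (1 - t) p)) = vsub (vsub x p) (vscale t (vsub s p)).
    apply: functional_extensionality => i; rewrite /vsub /vadd /vscale; ring.
  rewrite nn_sub_scale; lra.
set a := vinner (vsub x p) (vsub s p); set b := vinner (vsub s p) (vsub s p).
have hb : 0 <= b by exact: ip_pos.
case: (Rle_lt_dec a 0) => // ha.
pose t := Rmin 1 (a / (b + 1)).
have ht1 : 0 < a / (b + 1) by apply: Rdiv_lt_0_compat; lra.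
have ht : 0 < t <= 1 by rewrite /t; split; [apply: Rmin_glb_lt; lra | apply: Rmin_l].
have := key t ht.
have : t <= a / (b + 1) by apply: Rmin_r.
have -> : a / (b + 1) = a * / (b + 1) by [].
have hbi : 0 < / (b + 1) by apply: Rinv_0_lt_compat; lra.
have hinv : (b + 1) * / (b + 1) = 1 by field; lra.
move=> htle hk.
have h2 : 2 * a <= t * b.
  apply: (Rmult_le_reg_l t); first lra.
  have -> : t * (2 * a) = 2 * t * a by ring.
  have -> : t * (t * b) = t ^ 2 * b by ring. exact: hk.
have h3 : t * b <= a * / (b + 1) * b by apply: Rmult_le_compat_r.
have h4 : a * / (b + 1) * b < a by nra.
lra.
Qed.
End Proj.

Section Aux.
Variable n : nat.
Implicit Types u v w x : vec n.

Lemma nn_sub (X S : vec n) : vinner (vsub X S) (vsub X S) =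
  vinner X X - 2 * vinner X S + vinner S S.
Proof. rewrite ip_subl !ip_subr (ip_sym S X); ring. Qed.
Lemma nn_sym u v : vinner (vsub u v) (vsub u v) = vinner (vsub v u) (vsub v u).
Proof. rewrite !nn_sub (ip_sym u v); ring. Qed.

Lemma proj_toward (S : vec n -> Prop) x p c : convexS S -> is_proj S x p -> S c ->
  vinner (vsub p c) (vsub p c) <= vinner (vsub x c) (vsub x c).
Proof. move=> hv hp hc; have h := @proj_char _ S x p c hv hp hc.
have -> : vsub x c = vsub (vsub x p) (vsub c p).
  by apply: functional_extensionality => i; rewrite /vsub; ring.
rewrite (nn_sub (vsub x p)) (nn_sym p c); have := ip_pos (vsub x p); lra. Qed.

Lemma nn_bound (P Q : vec n) : vinner (vsub (vscale 2 P) Q) (vsub (vscale 2 P) Q) <=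
  8 * vinner P P + 2 * vinner Q Q.
Proof. have := ip_pos (vadd (vscale 2 P) Q).
rewrite nn_sub ip_addl !ip_addr !ip_scalel !ip_scaler (ip_sym Q P); lra. Qed.

Lemma ri_line (S : vec n -> Prop) z s : ri S z -> S s ->
  exists t, t < 0 /\ S (vadd (vscale t s) (vscale (1 - t) z)).
Proof. move=> [hz [r [hr H]]] hs.
have hn := vnorm_ge0 (vsub s z).
pose t := - r / (2 * (vnorm (vsub s z) + 1)).
have ht : t < 0 by rewrite /t; apply: Rdiv_neg_pos; lra.
exists t; split => //; apply: H.
  exists [:: (t, s); (1 - t, z)]; split; last split.
  - move=> p /= [<-|[<-|[]]] //=.
  - rewrite /=; ring.
  - apply: functional_extensionality => i; rewrite /= /vadd /vscale /vzero; ring.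
have -> : vsub (vadd (vscale t s) (vscale (1 - t) z)) z = vscale t (vsub s z).
  apply: functional_extensionality => i; rewrite /vsub /vadd /vscale; ring.
rewrite vnorm_scale Rabs_left //.
have -> : - t = r / (2 * (vnorm (vsub s z) + 1)) by rewrite /t; field; lra.
have : r / (2 * (vnorm (vsub s z) + 1)) * vnorm (vsub s z) =
   r / 2 * (vnorm (vsub s z) / (vnorm (vsub s z) + 1)) by field; lra.
move=> ->; have : vnorm (vsub s z) / (vnorm (vsub s z) + 1) < 1.
  apply: (Rmult_lt_reg_r (vnorm (vsub s z) + 1)); first lra.
  rewrite /Rdiv Rmult_assoc Rinv_l; lra.
have : 0 <= vnorm (vsub s z) / (vnorm (vsub s z) + 1) by apply: Rle_mult_inv_pos; lra.
nra. Qed.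

Lemma aff_orth (S : vec n -> Prop) ub c w : aff S w ->
  (forall s, S s -> vinner ub (vsub s c) = 0) -> vinner ub (vsub w c) = 0.
Proof. move=> [l [hl [h1 ->]]] H.
have : vinner ub (foldr (fun p v => vadd (vscale (fst p) (snd p)) v) vzero l) =
  foldr (fun p s => fst p + s) 0 l * vinner ub c.
  elim: l hl {h1} => [|p l IH] hl /=; first by rewrite ip_zero_r; ring.
  rewrite ip_addr ip_scaler IH; last by move=> q hq; apply: hl; right.
  have := H _ (hl p (or_introl erefl)); rewrite ip_subr => e.
  have -> : vinner ub p.2 = vinner ub c by lra. ring.
rewrite ip_subr h1 => ->; ring. Qed.
End Aux.

Lemma angle n (A B : vec n -> Prop)
  (hAc : closedS A) (hAv : convexS A) (hBc : closedS B) (hBv : convexS B)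
  z (hzA : ri A z) (hzB : ri B z) c (hcA : A c) (hcB : B c) :
  exists delta theta, 0 < delta /\ 0 <= theta < 1 /\ forall x, aff (setU2 A B) x ->
    vnorm (vsub x c) <= delta ->
    vinner (vsub x (proj A x)) (vsub (proj B (refl A x)) (refl A x)) <=
    theta * vnorm (vsub x (proj A x)) * vnorm (vsub (proj B (refl A x)) (refl A x)).
Proof.
have hPA : forall x, is_proj A x (proj A x) := fun x => proj_spec x hAc (ex_intro _ c hcA).
have hPB : forall x, is_proj B x (proj B x) := fun x => proj_spec x hBc (ex_intro _ c hcB).
pose e := fun k : nat => / (INR k + 1).
have he : forall k, 0 < e k <= 1.
  move=> k; rewrite /e; split; first (apply: Rinv_0_lt_compat; have := pos_INR k; lra).
  rewrite -Rinv_1; apply: Rinv_le_contravar; first lra. have := pos_INR k; lra.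
apply: NNPP => Hno.
have Hk : forall k, exists x, aff (setU2 A B) x /\ vnorm (vsub x c) <= e k /\
    (1 - e k) * vnorm (vsub x (proj A x)) * vnorm (vsub (proj B (refl A x)) (refl A x)) <
    vinner (vsub x (proj A x)) (vsub (proj B (refl A x)) (refl A x)).
  move=> k; apply: NNPP => H; apply: Hno; exists (e k), (1 - e k).
  split; first by case: (he k). split; first by have := he k; lra.
  move=> x hx hxc; apply: Rnot_lt_le => hlt; apply: H; by exists x.
pose X := fun k => proj1_sig (constructive_indefinite_description _ (Hk k)).
have hX : forall k, aff (setU2 A B) (X k) /\ vnorm (vsub (X k) c) <= e k /\
    (1 - e k) * vnorm (vsub (X k) (proj A (X k))) * vnorm (vsub (proj B (refl A (X k))) (refl A (X k))) <
    vinner (vsub (X k) (proj A (X k))) (vsub (proj B (refl A (X k))) (refl A (X k))).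
  by move=> k; rewrite /X; case: (constructive_indefinite_description _ _).
pose a := fun k => proj A (X k).
pose y := fun k => refl A (X k).
pose b := fun k => proj B (y k).
pose U := fun k => vsub (X k) (a k).
pose V := fun k => vsub (b k) (y k).
have hUV : forall k, 0 < vnorm (U k) /\ 0 < vnorm (V k).
  move=> k; case: (hX k) => _ [_ h]; have := CS (U k) (V k).
  have := vnorm_ge0 (U k); have := vnorm_ge0 (V k); have := he k.
  rewrite /U /V /a /b /y in h * => h1 h2 h3 h4.
  move: h1 h2 h3 h4 h; rewrite -/(U k) -/(V k).
  generalize (vnorm (U k)) (vnorm (V k)) (vinner (U k) (V k)) => p q m h1 h2 h3 h4 h.
  split; apply: Rnot_le_lt => hp.
  - have hp0 : p = 0 by lra. subst p. lra.
  - have hq0 : q = 0 by lra. subst q. lra.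
pose Uh := fun k => vscale (/ vnorm (U k)) (U k).
pose Vh := fun k => vscale (/ vnorm (V k)) (V k).
have nn1 : forall (W : vec n), 0 < vnorm W -> vinner (vscale (/ vnorm W) W) (vscale (/ vnorm W) W) = 1.
  move=> W hW; rewrite ip_scalel ip_scaler -vnorm_sq; field; lra.
have F1 : forall k, vinner (Uh k) (Uh k) = 1 by move=> k; apply: nn1; case: (hUV k).
have F1' : forall k, vinner (Vh k) (Vh k) = 1 by move=> k; apply: nn1; case: (hUV k).
have F2 : forall k, vinner (vsub (Vh k) (Uh k)) (vsub (Vh k) (Uh k)) <= 2 * e k.
  move=> k; rewrite nn_sub F1 F1' /Vh /Uh ip_scalel ip_scaler.
  case: (hX k) => _ [_ h]; case: (hUV k) => hu hv.
  rewrite -/(a k) -/(y k) -/(b k) -/(U k) -/(V k) in h.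
  rewrite (ip_sym (V k)).
  have : (1 - e k) < vinner (U k) (V k) / (vnorm (U k) * vnorm (V k)).
    apply: (Rmult_lt_reg_r (vnorm (U k) * vnorm (V k))); first nra.
    rewrite /Rdiv Rmult_assoc Rinv_l; nra.
  have -> : / vnorm (V k) * (/ vnorm (U k) * vinner (U k) (V k)) =
    vinner (U k) (V k) / (vnorm (U k) * vnorm (V k)) by field; lra.
  lra.
have F3 : forall k i, Rabs (Uh k i) <= 2.
  move=> k i; have := abs_le_sq (coord_sq (Uh k) i); rewrite F1; lra.
have hxc : forall k, vinner (vsub (X k) c) (vsub (X k) c) <= e k.
  move=> k; case: (hX k) => _ [h _]; have := he k; have := vnorm_sq (vsub (X k) c).
  have := vnorm_ge0 (vsub (X k) c); nra.
have F4 : forall k, vinner (vsub (a k) c) (vsub (a k) c) <= e k.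
  move=> k; apply: Rle_trans (hxc k); exact: (@proj_toward _ A _ _ c hAv (hPA _) hcA).
have F5 : forall k, vinner (vsub (b k) c) (vsub (b k) c) <= 10 * e k.
  move=> k; apply: Rle_trans (@proj_toward _ B _ _ c hBv (hPB _) hcB) _.
  have -> : vsub (y k) c = vsub (vscale 2 (vsub (a k) c)) (vsub (X k) c).
    apply: functional_extensionality => i; rewrite /y /a /refl /vsub /vscale; ring.
  have := nn_bound (vsub (a k) c) (vsub (X k) c); have := F4 k; have := hxc k; lra.
have F6 : forall k s, A s -> vinner (Uh k) (vsub s (a k)) <= 0.
  move=> k s hs; rewrite /Uh ip_scalel; have := @proj_char _ A _ _ s hAv (hPA (X k)) hs.
  case: (hUV k) => hu _; have : 0 < / vnorm (U k) by apply: Rinv_0_lt_compat.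
  rewrite /U /a; nra.
have F7 : forall k s, B s -> 0 <= vinner (Vh k) (vsub s (b k)).
  move=> k s hs; rewrite /Vh ip_scalel; have := @proj_char _ B _ _ s hBv (hPB (y k)) hs.
  case: (hUV k) => _ hv; have : 0 < / vnorm (V k) by apply: Rinv_0_lt_compat.
  have -> : V k = vscale (-1) (vsub (y k) (proj B (y k))).
    apply: functional_extensionality => i; rewrite /V /b /vsub /vscale; ring.
  rewrite ip_scalel /b; nra.
case: (@BWn _ Uh 2 F3) => phi [ub [hphi hcvU]].
have hemono : forall k, e (phi k) <= e k.
  move=> k; rewrite /e; apply: Rinv_le_contravar; first (have := pos_INR k; lra).
  have := le_INR _ _ (incr_ge hphi k); lra.
have cvc : forall r, Un_cv (fun _ : nat => r) r.
  move=> r eps heps; exists 0%nat => k _; rewrite /Rdist Rminus_diag Rabs_R0 //.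
have hcva : vcv (fun k => a (phi k)) c.
  apply: (@vcv_close _ (fun k => a (phi k)) (fun _ => c) c 1); [lra| |exact: vcv_const].
  move=> k /=; have := F4 (phi k); have := hemono k; rewrite /e; lra.
have hcvb : vcv (fun k => b (phi k)) c.
  apply: (@vcv_close _ (fun k => b (phi k)) (fun _ => c) c 10); [lra| |exact: vcv_const].
  move=> k /=; have := F5 (phi k); have := hemono k; rewrite /e; lra.
have hcvV : vcv (fun k => Vh (phi k)) ub.
  apply: (@vcv_close _ (fun k => Vh (phi k)) (fun k => Uh (phi k)) ub 2); [lra| |exact: hcvU].
  move=> k /=; have := F2 (phi k); have := hemono k; rewrite /e; lra.
have G1 : forall s, A s -> vinner ub (vsub s c) <= 0.
  move=> s hs; apply: (cv_le0 (ip_cv hcvU (vcv_sub (vcv_const s) hcva))) => k.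
  exact: F6.
have G2 : forall s, B s -> 0 <= vinner ub (vsub s c).
  move=> s hs; have h2 := cv_le0 (CV_opp _ _ (ip_cv hcvV (vcv_sub (vcv_const s) hcvb))).
  have h1 := fun k => F7 (phi k) s hs.
  suff : - vinner ub (vsub s c) <= 0 by lra.
  apply: h2 => k /=; have := h1 k; rewrite /opp_seq; lra.
have hz0 : vinner ub (vsub z c) = 0.
  have := G1 z (proj1 hzA); have := G2 z (proj1 hzB); lra.
have lineq : forall s t, vinner ub (vsub (vadd (vscale t s) (vscale (1 - t) z)) c) =
    t * vinner ub (vsub s c).
  move=> s t.
  have -> : vsub (vadd (vscale t s) (vscale (1 - t) z)) c =
    vadd (vscale t (vsub s c)) (vscale (1 - t) (vsub z c)).
    apply: functional_extensionality => i; rewrite /vsub /vadd /vscale; ring.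
  rewrite ip_addr !ip_scaler hz0; ring.
have G4 : forall s, setU2 A B s -> vinner ub (vsub s c) = 0.
  move=> s [hs|hs].
  - case: (@ri_line _ A z s hzA hs) => t [ht hw]; have := G1 _ hw; rewrite lineq.
    have := G1 _ hs; nra.
  - case: (@ri_line _ B z s hzB hs) => t [ht hw]; have := G2 _ hw; rewrite lineq.
    have := G2 _ hs; nra.
have G6 : forall k, vinner ub (Uh k) = 0.
  move=> k; rewrite /Uh ip_scaler.
  have -> : U k = vsub (vsub (X k) c) (vsub (a k) c).
    apply: functional_extensionality => i; rewrite /U /vsub; ring.
  rewrite ip_subr (aff_orth (proj1 (hX k)) G4) G4; first ring.
  left; exact: (proj1 (hPA (X k))).
have G3 : vinner ub ub = 1.
  have h := ip_cv hcvU hcvU.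
  have h' : Un_cv (fun k => vinner (Uh (phi k)) (Uh (phi k))) 1.
    have -> : (fun k => vinner (Uh (phi k)) (Uh (phi k))) = fun _ => 1.
      apply: functional_extensionality => k; exact: F1.
    exact: cvc.
  exact: UL_sequence _ _ _ h h'.
have h := ip_cv (vcv_const ub) hcvU.
have h' : Un_cv (fun k => vinner ub (Uh (phi k))) 0.
  have -> : (fun k => vinner ub (Uh (phi k))) = fun _ => 0.
    apply: functional_extensionality => k; exact: G6.
  exact: cvc.
have := UL_sequence _ _ _ h h'; lra.
Qed.
Unset Implicit Arguments.

Theorem lemma4p2 (n : nat) (A B : vec n -> Prop)
  (hAc : closedS A) (hAv : convexS A)
  (hBc : closedS B) (hBv : convexS B)
  (hri : exists z, ri A z /\ ri B z)
  (c : vec n) (hcA : A c) (hcB : B c) :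
  exists delta theta : R, 0 < delta /\ 0 <= theta < 1 /\
    forall x : vec n, aff (setU2 A B) x -> vnorm (vsub x c) <= delta ->
      vinner (vsub (proj A x) (refl A x)) (vsub (proj B (refl A x)) (refl A x))
        <= theta * dS A x * dS B (refl A x)
      /\ (1 - theta) / 5 * Rmax (dS A x ^ 2) (dS B x ^ 2)
           <= vnorm (vsub x (Tdr A B x)) ^ 2.
Proof.
case: hri => z [hzA hzB].
case: (@angle n A B hAc hAv hBc hBv z hzA hzB c hcA hcB) => delta [theta [hd [ht H]]].
exists delta, theta; split => //; split => // x hx hxc.
have hPB : forall x, is_proj B x (proj B x) := fun x => proj_spec x hBc (ex_intro _ c hcB).
set a := proj A x; set y := refl A x; set b := proj B y.
have H1 := H x hx hxc; rewrite -/a -/y -/b in H1.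
have eU : vsub a y = vsub x a.
  by apply: functional_extensionality => i; rewrite /y /refl /vsub /vscale -/a; ring.
have dA : dS A x = vnorm (vsub x a) by [].
have dBy : dS B y = vnorm (vsub b y) by rewrite /dS -/b vnorm_sym.
rewrite eU dA dBy; split => //.
have eT : vsub x (Tdr A B x) = vsub (vsub x a) (vsub b y).
  apply: functional_extensionality => i; rewrite /Tdr /y /refl /vsub /vadd /vscale -/a -/b /y /refl -/a; ring.
have eB : vsub x b = vsub (vscale 2 (vsub x a)) (vsub b y).
  apply: functional_extensionality => i; rewrite /y /refl /vsub /vadd /vscale -/a; ring.
have dBx : dS B x <= vnorm (vsub x b).
  rewrite /dS; apply: (proj2 (hPB x)); exact: (proj1 (hPB y)).
rewrite eB in dBx; rewrite eT.
move: H1 dBx; generalize (vsub x a) (vsub b y) => U V H1 dBx.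
have hu := vnorm_sq U; have hv := vnorm_sq V.
have nU := vnorm_ge0 U; have nV := vnorm_ge0 V.
have hdB0 : 0 <= dS B x by exact: vnorm_ge0.
have e1 : vnorm (vsub U V) ^ 2 = vinner U U - 2 * vinner U V + vinner V V by rewrite vnorm_sq nn_sub.
have e2 : vnorm (vsub (vscale 2 U) V) ^ 2 <= 5 * (vinner U U + vinner V V).
  rewrite vnorm_sq nn_sub ip_scalel ip_scaler ip_scalel.
  have := ip_pos (vadd U (vscale 2 V)).
  rewrite ip_addl !ip_addr !ip_scalel !ip_scaler (ip_sym V U); lra.
have hdB2 : dS B x ^ 2 <= 5 * (vinner U U + vinner V V).
  apply: Rle_trans e2; have := vnorm_ge0 (vsub (vscale 2 U) V); nra.
have hmax : Rmax (vnorm U ^ 2) (dS B x ^ 2) <= 5 * (vinner U U + vinner V V).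
  apply: Rmax_lub; last exact: hdB2. rewrite hu; have := ip_pos V; have := ip_pos U; lra.
rewrite e1.
have : (1 - theta) * (vinner U U + vinner V V) <= vinner U U - 2 * vinner U V + vinner V V.
  rewrite -hu -hv; case: ht => ht0 ht1; have : 0 <= theta * (vnorm U - vnorm V) ^ 2 by apply: Rmult_le_pos => //; apply: pow2_ge_0. nra.
have : (1 - theta) / 5 * Rmax (vnorm U ^ 2) (dS B x ^ 2) <= (1 - theta) * (vinner U U + vinner V V).
  have -> : (1 - theta) * (vinner U U + vinner V V) = (1 - theta) / 5 * (5 * (vinner U U + vinner V V)) by field.
  apply: Rmult_le_compat_l => //; lra.
lra.
Qed.
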